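(* Let $A_1,B_1,A_2,B_2\in\mathrm{SL}_2(\mathbb C)$ with $[A_1,B_1][A_2,B_2]=I$, where $[X,Y]=XYX^{-1}Y^{-1}$. Assume there exists $M\in\mathrm{SL}_2(\mathbb C)$ with $$MA_1M^{-1}=A_2,\qquad MB_1M^{-1}=B_2,\qquad M^2=-I.$$ Set $A=A_1$, $B=B_1$, $C_1=M$, $C_2=M^{-1}[A_1,B_1]$. Then $[A,B]=C_1C_2$, $\mathrm{trace}(C_1)=\mathrm{trace}(C_2)=0$, and $(A_1,B_1,A_2,B_2)=(A,\,B,\,C_1^{-1}AC_1,\,C_1^{-1}BC_1)$, i.e. $(A_1,B_1,A_2,B_2)=\pi^*(A,B,C_1,C_2)$. If moreover $\mathrm{trace}[A_1,B_1]\neq2$, then $(A_1,B_1,A_2,B_2)$ comes from a representation of the $5$-punctured sphere: up to simultaneous conjugation, there exist $M_0,M_1,M_t,M_\lambda,M_\infty\in\mathrm{SL}_2(\mathbb C)$ with $M_0M_1M_tM_\lambda M_\infty=I$ and all five of trace $0$, such that $A_1=M_1M_tM_\lambda$, $B_1=M_\lambda M_\infty$, $A_2=M_t^{-1}A_1M_t$, $B_2=M_t^{-1}B_1M_t$.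
   Context: Representation spaces: $\tilde{\mathcal R}_{1/2}$ is the set of $(A,B,C_1,C_2)\in\mathrm{SL}_2(\mathbb C)^4$ with $[A,B]=C_1C_2$ and $\mathrm{trace}(C_1)=\mathrm{trace}(C_2)=0$, modulo simultaneous conjugation (monodromy of connections on an elliptic curve with two poles of exponent $\frac12$); $\mathcal R'$ is the set of $(A_1,B_1,A_2,B_2)\in\mathrm{SL}_2(\mathbb C)^4$ with $[A_1,B_1][A_2,B_2]=I$ modulo simultaneous conjugation (monodromy of genus $2$ curves). The map $\pi^*:\tilde{\mathcal R}_{1/2}\to\mathcal R'$, induced by the double cover of the elliptic curve branched at the two poles, is $\pi^*(A,B,C_1,C_2)=(A,B,C_1^{-1}AC_1,C_1^{-1}BC_1)$. A representation of the $5$-punctured sphere with all exponents $\frac12$ is a quintuple $(M_0,M_1,M_t,M_\lambda,M_\infty)$ of traceless matrices in $\mathrm{SL}_2(\mathbb C)$ with product $I$; it is sent into $\tilde{\mathcal R}_{1/2}$ and then by $\pi^*$ into $\mathcal R'$ via the formulas in the claim. *)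

(* Defs.v *)
From HB Require Import structures.
From mathcomp Require Import all_boot all_order all_algebra.
From mathcomp Require Import reals.
From mathcomp.real_closed Require Import complex.

Set Implicit Arguments.
Unset Strict Implicit.
Unset Printing Implicit Defensive.

Import GRing.Theory.
Local Open Scope ring_scope.

Notation M2 R := ('M[(complex R)]_2).

Definition SL2 {R : realType} (X : M2 R) : Prop := \det X = 1.

Definition comm {R : realType} (X Y : M2 R) : M2 R :=
  X *m Y *m invmx X *m invmx Y.

(* Main.v *)
Require Import Defs.
From HB Require Import structures.
From mathcomp Require Import all_boot all_order all_algebra.
From mathcomp Require Import reals.
From mathcomp.real_closed Require Import complex.
From mathcomp Require Import ring.

Import GRing.Theory Num.Theory Num.Def.
Local Open Scope ring_scope.

Section Helpers.
Context {F : fieldType}.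
Implicit Types X Y P : 'M[F]_2.

Lemma det22 X : \det X = X 0 0 * X 1 1 - X 0 1 * X 1 0.
Proof.
rewrite (expand_det_row _ 0) !big_ord_recl big_ord0 /cofactor !det_mx11 /=.
rewrite !mxE /=.
have e1 : lift (0:'I_2) (0:'I_1) = 1 by apply/val_inj.
have e3 : lift (lift (ord0:'I_2) (ord0:'I_1)) (0:'I_1) = 0 by apply/val_inj.
rewrite e3 e1 /= expr0 expr1.
have e0 : (ord0 : 'I_2) = 0 by apply/val_inj.
rewrite e0; ring.
Qed.

Lemma mx22P X Y : X 0 0 = Y 0 0 -> X 0 1 = Y 0 1 -> X 1 0 = Y 1 0 -> X 1 1 = Y 1 1 -> X = Y.
Proof.
move=> h00 h01 h10 h11; apply/matrixP => i j.
have hi : i = 0 \/ i = 1 by case: i => [[|[|k]] Hk]; [left; apply/val_inj|right; apply/val_inj|done].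
have hj : j = 0 \/ j = 1 by case: j => [[|[|k]] Hk]; [left; apply/val_inj|right; apply/val_inj|done].
by case: hi => ->; case: hj => ->.
Qed.

Lemma mul22 X Y i j : (X *m Y) i j = X i 0 * Y 0 j + X i 1 * Y 1 j.
Proof.
rewrite !mxE !big_ord_recl big_ord0 addr0.
have e1 : lift (0:'I_2) (0:'I_1) = 1 by apply/val_inj.
have e0 : (ord0 : 'I_2) = 0 by apply/val_inj.
by rewrite e1 e0.
Qed.

Lemma tr22 X : \tr X = X 0 0 + X 1 1.
Proof.
rewrite /mxtrace !big_ord_recl big_ord0 addr0.
have e1 : lift (0:'I_2) (0:'I_1) = 1 by apply/val_inj.
have e0 : (ord0 : 'I_2) = 0 by apply/val_inj.
by rewrite e1 e0.
Qed.

Lemma sc22 (a : F) i j : (a%:M : 'M[F]_2) i j = if i == j then a else 0.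
Proof. by rewrite !mxE; case: (i == j); rewrite ?mulr1n ?mulr0n. Qed.

Ltac ent := apply: mx22P; rewrite ?(mul22, tr22, det22, sc22, mxE) /=.

Lemma CH X : X *m X = \tr X *: X - (\det X)%:M.
Proof. ent; ring. Qed.

Lemma inv1 X : \det X = 1 -> invmx X = (\tr X)%:M - X.
Proof.
move=> d.
have u : X \in unitmx by rewrite unitmxE d unitr1.
have h : X *m ((\tr X)%:M - X) = 1%:M.
  rewrite mulmxBr CH mul_mx_scalar d; apply/matrixP=> i j; rewrite !mxE; ring.
by rewrite -[RHS]mul1mx -(mulVmx u) -mulmxA h mulmx1.
Qed.

Lemma detsub1 X : \det X = 1 -> \det (X - 1%:M) = 2 - \tr X.
Proof. move=> d; move: d; rewrite !det22 !tr22 !mxE /= => d.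
apply/eqP; rewrite -subr_eq0; apply/eqP.
transitivity (X 0 0 * X 1 1 - X 0 1 * X 1 0 - 1); [ring | by rewrite d subrr].
Qed.
Lemma unitSL X : \det X = 1 -> X \in unitmx.
Proof. by move=> d; rewrite unitmxE d unitr1. Qed.

Lemma inv_uniq X Y : X *m Y = 1%:M -> invmx X = Y.
Proof.
move=> h; have [u _] := mulmx1_unit h.
by rewrite -[RHS]mul1mx -(mulVmx u) -mulmxA h mulmx1.
Qed.

Lemma tr_sq0 X : \det X = 1 -> X *m X = - 1%:M -> \tr X = 0.
Proof.
move=> d h.
have e : \tr X ^+ 2 = \tr (X *m X) + 2 * \det X.
  by rewrite !tr22 !mul22 det22; ring.
have t1 : \tr (- 1%:M : 'M[F]_2) = -2 by rewrite tr22 !mxE /=; ring.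
rewrite h t1 d in e.
have : \tr X ^+ 2 == 0 by rewrite e; apply/eqP; ring.
by rewrite expf_eq0 /= => /eqP.
Qed.

Lemma inv_tl X : \det X = 1 -> \tr X = 0 -> invmx X = - X.
Proof. by move=> d t; rewrite inv1 // t raddf0 sub0r. Qed.

Lemma detinv1 X : \det X = 1 -> \det (invmx X) = 1.
Proof. by move=> d; rewrite det_inv d invr1. Qed.

Lemma conj_inv P X : P \in unitmx -> X \in unitmx ->
  invmx (P *m X *m invmx P) = P *m invmx X *m invmx P.
Proof.
move=> uP uX; apply: inv_uniq.
by rewrite !mulmxA (mulmxKV uP) (mulmxK uX) (mulmxV uP).
Qed.

End Helpers.

Lemma conj_comm (R : realType) (P X Y : M2 R) : P \in unitmx -> X \in unitmx -> Y \in unitmx ->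
  comm (P *m X *m invmx P) (P *m Y *m invmx P) = P *m comm X Y *m invmx P.
Proof.
move=> uP uX uY; rewrite /comm !conj_inv //.
by rewrite !mulmxA !(mulmxKV uP).
Qed.

Theorem mainTheorem4 (R : realType) (A1 B1 A2 B2 M : M2 R) :
  SL2 A1 -> SL2 B1 -> SL2 A2 -> SL2 B2 ->
  comm A1 B1 *m comm A2 B2 = 1%:M ->
  SL2 M ->
  M *m A1 *m invmx M = A2 ->
  M *m B1 *m invmx M = B2 ->
  M *m M = - 1%:M ->
  (let A := A1 in let B := B1 in let C1 := M in
   let C2 := invmx M *m comm A1 B1 in
   [/\ comm A B = C1 *m C2, \tr C1 = 0, \tr C2 = 0,
       SL2 C1 /\ SL2 C2 &
       (A1, B1, A2, B2) = (A, B, invmx C1 *m A *m C1, invmx C1 *m B *m C1)])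
  /\
  (\tr (comm A1 B1) != 2 ->
   exists (P M0 M1 Mt Ml Minf : M2 R),
     SL2 P /\ [/\ SL2 M0, SL2 M1, SL2 Mt, SL2 Ml & SL2 Minf] /\
     M0 *m M1 *m Mt *m Ml *m Minf = 1%:M /\
     [/\ \tr M0 = 0, \tr M1 = 0, \tr Mt = 0, \tr Ml = 0 & \tr Minf = 0] /\
     [/\ P *m A1 *m invmx P = M1 *m Mt *m Ml,
         P *m B1 *m invmx P = Ml *m Minf,
         P *m A2 *m invmx P = invmx Mt *m (P *m A1 *m invmx P) *m Mt &
         P *m B2 *m invmx P = invmx Mt *m (P *m B1 *m invmx P) *m Mt]).
Proof.
rewrite /SL2 => dA dB _ _ hK dM hA2 hB2 hMM.
have uA := unitSL _ dA; have uB := unitSL _ dB; have uM := unitSL _ dM.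
set K := comm A1 B1 in hK *.
have dK : \det K = 1.
  by rewrite /K /comm !det_mulmx !detinv1 // dA dB !mulr1.
have trM : \tr M = 0 by apply: tr_sq0.
have iM : invmx M = - M by apply: inv_tl.
have hA2' : invmx M *m A1 *m M = A2.
  by rewrite -hA2 iM !mulNmx mulmxN.
have hB2' : invmx M *m B1 *m M = B2.
  by rewrite -hB2 iM !mulNmx mulmxN.
have cK : comm A2 B2 = M *m K *m invmx M.
  by rewrite -hA2 -hB2 conj_comm.
have dKM : \det (K *m M) = 1 by rewrite det_mulmx dK dM mulr1.
have KMKM : K *m M *m (K *m M) = - 1%:M.
  move: hK; rewrite cK iM.
  rewrite !mulmxA mulmxN => h.
  by rewrite -h opprK.
have trKM : \tr (K *m M) = 0 by apply: tr_sq0.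
have trMK : \tr (M *m K) = 0 by rewrite mxtrace_mulC.
split.
  split.
  - by rewrite mulmxA (mulmxV uM) mul1mx.
  - exact: trM.
  - by rewrite iM mulNmx raddfN /= trMK oppr0.
  - by split=> //; rewrite det_mulmx detinv1 // dK mulr1.
  - by rewrite hA2' hB2'.
move=> hK2.
have Kdef : K = A1 *m B1 *m invmx A1 *m invmx B1 by [].
clearbody K.
have CHA : A1 *m A1 = \tr A1 *: A1 - 1%:M by rewrite CH dA.
set L := B1 *m A1 *m invmx B1 - A1.
have trL : \tr L = 0.
  by rewrite /L raddfB /= mxtrace_mulC mulmxA (mulVmx uB) mul1mx subrr.
have invK : invmx K = B1 *m A1 *m invmx B1 *m invmx A1.
  apply: inv_uniq; rewrite Kdef ?mulmxA (mulmxKV uB) (mulmxKV uA) (mulmxK uB).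
  by rewrite (mulmxV uA).
have LK : L = (invmx K - 1%:M) *m A1.
  by rewrite invK mulmxBl mul1mx (mulmxKV uA).
have dL : \det L = 2 - \tr K.
  rewrite LK det_mulmx dA mulr1 detsub1 ?detinv1 // inv1 // raddfB /= mxtrace_scalar.
  ring.
have dL0 : \det L != 0 by rewrite dL subr_eq0 eq_sym.
set s := sqrtC (\det L).
have s2 : s ^+ 2 = \det L := sqrtCK _.
have s0 : s != 0.
  by apply: contraNneq dL0 => s0; rewrite -s2 s0 expr0n.
set Ml := s^-1 *: L.
have dMl : \det Ml = 1 by rewrite detZ exprVn s2 mulVf.
have trMl : \tr Ml = 0 by rewrite mxtraceZ trL mulr0.
have iMl : invmx Ml = - Ml by apply: inv_tl.
have uMl := unitSL _ dMl.
exists 1%:M, (invmx B1 *m Ml *m invmx A1), (A1 *m invmx Ml *m invmx M), M, Ml,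
  (invmx Ml *m B1).
rewrite invmx1 !mul1mx !mulmx1.
split; first by rewrite det1.
split.
  split; rewrite ?det_mulmx; rewrite ?detinv1 //; by rewrite ?dA ?dB ?dMl ?dM ?mulr1.
split.
  by rewrite !mulmxA !(mulmxKV uA, mulmxK uMl, mulmxKV uM) (mulVmx uB).
split.
  split=> //.
  - rewrite -scalemxAr -scalemxAl mxtraceZ.
    have e1 : \tr (A1 *m invmx B1 *m invmx A1) = \tr (invmx B1).
      by rewrite mxtrace_mulC mulmxA (mulVmx uA) mul1mx.
    have e2 : \tr (invmx B1 *m A1 *m invmx A1) = \tr (invmx B1).
      by rewrite -mulmxA (mulmxV uA) mulmx1.
    rewrite /L mulmxBr mulmxBl raddfB /= !mulmxA (mulVmx uB) mul1mx e1 e2.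
    by rewrite subrr mulr0.
  - rewrite iMl iM !mulmxN mulNmx opprK -scalemxAr -scalemxAl mxtraceZ.
    have core : \tr (A1 *m L *m M) = 0.
      rewrite -mulmxA mxtrace_mulC /L mulmxBl mulmxBl raddfB /=.
      have e3 : \tr (B1 *m A1 *m invmx B1 *m M *m A1) = \tr A1 * \tr (M *m A1) - \tr (M *m K).
        have h1 : A1 *m B1 *m A1 *m invmx B1 = K *m B1 *m (A1 *m A1) *m invmx B1.
          by rewrite Kdef ?mulmxA (mulmxKV uB) (mulmxKV uA).
        have h2 : K *m B1 *m A1 *m invmx B1 = A1.
          by rewrite Kdef ?mulmxA (mulmxKV uB) (mulmxKV uA) (mulmxK uB).
        have h : A1 *m B1 *m A1 *m invmx B1 = \tr A1 *: A1 - K.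
          rewrite h1 CHA mulmxBr mulmx1 mulmxBl (mulmxK uB) -scalemxAr -scalemxAl.
          by rewrite h2.
        have e3' : \tr (B1 *m A1 *m invmx B1 *m M *m A1) =
                   \tr (M *m (A1 *m B1 *m A1 *m invmx B1)).
          rewrite [LHS](_ : _ = \tr ((B1 *m A1 *m invmx B1) *m (M *m A1))).
            by rewrite mxtrace_mulC !mulmxA.
          by rewrite !mulmxA.
        by rewrite e3' h mulmxDr mulmxN mxtraceD raddfN /= -scalemxAr mxtraceZ.
      have e4 : \tr (A1 *m M *m A1) = \tr A1 * \tr (M *m A1).
        rewrite mxtrace_mulC mulmxA CHA mulmxBl mul1mx raddfB /= trM subr0.
        by rewrite -scalemxAl mxtraceZ mxtrace_mulC.
      by rewrite e3 e4 trMK subr0 subrr.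
    by rewrite core mulr0.
  - rewrite iMl mulNmx raddfN /= -scalemxAl mxtraceZ.
    rewrite /L mulmxBl raddfB /= (mulmxKV uB) mxtrace_mulC subrr.
    by rewrite mulr0 oppr0.
split.
- by rewrite (mulmxKV uM) (mulmxKV uMl).
- by rewrite mulmxA (mulmxV uMl) mul1mx.
- by rewrite hA2'.
- by rewrite hB2'.
Qed.
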